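(* Let $n\ge0$. If $\Lambda\in\widetilde{\mathrm{NC}}^{\mathrm B}(n)$ has $2k+1$ blocks, then $\Lambda^+\in\widetilde{\mathrm{NC}}^{\mathrm B}(n)$ and $\Lambda^+$ has $2(n-k)+1$ blocks.
   Context: A set partition of a finite set $\mathcal X\subset\mathbb Z$ is a set of nonempty pairwise disjoint sets (blocks) with union $\mathcal X$. A pair $(i,j)$ is an arc of $\Lambda$ if $i<j$ lie in the same block and $j$ is the least element of that block greater than $i$; $\mathrm{Arc}(\Lambda)$ is the set of arcs (which with $\mathcal X$ determines $\Lambda$). Let $[\pm n]=\{\pm1,\dots,\pm n\}$. $\Pi^{\mathrm B}(n)$ is the set of partitions $\Lambda$ of $\{0\}\cup[\pm n]$ such that $(i,j)\in\mathrm{Arc}(\Lambda)$ iff $(-j,-i)\in\mathrm{Arc}(\Lambda)$. $\widetilde{\mathrm{NC}}^{\mathrm B}(n)$ is the set of $\Lambda\in\Pi^{\mathrm B}(n)$ such that whenever $(i,k),(j,l)\in\mathrm{Arc}(\Lambda)$ with $i<j<k<l$, we have $(i,k)=(-l,-j)$. For a partition $\Lambda$ of $\mathcal X$, $\Lambda^+$ is the partition of $\mathcal X$ with arc set $(\mathrm{Arc}(\Lambda)\setminus\mathcal S)\cup\mathcal T$, where $\mathcal S=\{(i,i+1):i\in\mathbb Z\}$ and $\mathcal T$ is the set of pairs $(i,i+1)\in\mathcal X\times\mathcal X$ with $i$ maximal in its block of $\Lambda$ and $i+1$ minimal in its block of $\Lambda$. *)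

(* Defs.v *)
From mathcomp Require Import all_boot all_order all_algebra.
Set Implicit Arguments. Unset Strict Implicit. Unset Printing Implicit Defensive.
Import Order.TTheory GRing.Theory Num.Theory.

(* The ground set {0} ∪ [±n] = {-n,...,n} ⊂ Z is encoded by the finite type
   'I_(2n+1); the ordinal i stands for the integer zval i = i - n. *)
Definition pt (n : nat) := 'I_(n.*2.+1).

Definition zval {n : nat} (i : pt n) : int := (nat_of_ord i)%:Z - n%:Z.

Definition is_setpart {n : nat} (P : {set {set pt n}}) : bool :=
  partition P [set: pt n].

Definition is_arc {n : nat} (P : {set {set pt n}}) (i j : pt n) : bool :=
  [&& (zval i < zval j)%R,
      [exists B in P, (i \in B) && (j \in B)] &
      [forall B in P, forall m in B,
          (i \in B) && (zval i < zval m)%R ==> (zval j <= zval m)%R]].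

Definition PiB {n : nat} (P : {set {set pt n}}) : Prop :=
  is_setpart P /\
  forall i j : pt n, is_arc P i j <->
    (exists i' j' : pt n, zval i' = (- zval j)%R /\ zval j' = (- zval i)%R
                          /\ is_arc P i' j').

Definition NCB {n : nat} (P : {set {set pt n}}) : Prop :=
  PiB P /\
  forall i j k l : pt n,
    is_arc P i k -> is_arc P j l ->
    (zval i < zval j)%R -> (zval j < zval k)%R -> (zval k < zval l)%R ->
    zval i = (- zval l)%R /\ zval k = (- zval j)%R.

Definition is_max_in_block {n : nat} (P : {set {set pt n}}) (i : pt n) : bool :=
  [forall B in P, forall m in B, (i \in B) ==> (zval m <= zval i)%R].
Definition is_min_in_block {n : nat} (P : {set {set pt n}}) (i : pt n) : bool :=
  [forall B in P, forall m in B, (i \in B) ==> (zval i <= zval m)%R].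

(* Membership in the arc set (Arc(P) \ S) ∪ T defining P^+. *)
Definition plus_arc {n : nat} (P : {set {set pt n}}) (i j : pt n) : bool :=
  (is_arc P i j && (zval j != (zval i + 1)%R))
  || [&& zval j == (zval i + 1)%R, is_max_in_block P i & is_min_in_block P j].

(* Main.v *)
Require Import Defs.
From mathcomp Require Import all_boot all_order all_algebra.
From mathcomp Require Import zify.
Import GRing.Theory Num.Theory.
Set Implicit Arguments. Unset Strict Implicit.

Section Z.
Variable n : nat.
Implicit Types i j : pt n.
Lemma zlt i j : (zval i < zval j)%R = (i < j)%N.
Proof. rewrite /zval. apply/idP/idP; lia. Qed.
Lemma zle i j : (zval i <= zval j)%R = (i <= j)%N.
Proof. rewrite /zval. apply/idP/idP; lia. Qed.
Lemma zinj i j : zval i = zval j -> i = j.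
Proof. rewrite /zval => H; apply: val_inj => /=. lia. Qed.
Lemma zeq i j : (zval j == zval i + 1)%R = (j == i.+1 :> nat).
Proof. rewrite /zval. apply/eqP/eqP; lia. Qed.
Lemma zrev i : zval (rev_ord i) = (- zval i)%R.
Proof. rewrite /zval /=. have := ltn_ord i. lia. Qed.
End Z.

Section Part.
Variable n : nat.
Variable P : {set {set pt n}}.
Hypothesis HP : partition P [set: pt n].

Lemma tI : trivIset P. Proof. by case/and3P: HP. Qed.
Lemma inblk x : x \in pblock P x.
Proof. case/and3P: HP => /eqP Hc _ _. by rewrite mem_pblock Hc inE. Qed.
Lemma blkP x : pblock P x \in P.
Proof. case/and3P: HP => /eqP Hc _ _. by rewrite pblock_mem // Hc inE. Qed.
Lemma blk_def B x : B \in P -> x \in B -> pblock P x = B.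
Proof. exact: def_pblock tI. Qed.
Arguments blk_def [B x].
Lemma blk_sym x y : y \in pblock P x -> pblock P y = pblock P x.
Proof. exact: same_pblock tI. Qed.
Arguments blk_sym [x y].
Lemma sameE x y : [exists B in P, (x \in B) && (y \in B)] = (y \in pblock P x).
Proof.
apply/existsP/idP.
  by case=> B /andP[BP /andP[xB yB]]; rewrite (blk_def BP xB).
by move=> H; exists (pblock P x); rewrite blkP inblk H.
Qed.

Lemma arcE i j : is_arc P i j = [&& (i < j)%N, j \in pblock P i &
   [forall m in pblock P i, (i < m)%N ==> (j <= m)%N]].
Proof.
rewrite /is_arc zlt sameE. congr [&& _, _ & _]. apply/forallP/forallP.
  move=> H m; apply/implyP=> mB; apply/implyP => im.
  have := H (pblock P i); rewrite blkP /= => /forallP/(_ m).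
  by rewrite mB /= inblk /= zlt im zle.
move=> H B; apply/implyP => BP; apply/forallP => m; apply/implyP => mB.
apply/implyP => /andP[iB im]. rewrite zlt in im; rewrite zle.
have := H m; rewrite (blk_def BP iB) mB /= im. by [].
Qed.

Lemma maxE i : is_max_in_block P i = [forall m in pblock P i, (m <= i)%N].
Proof.
apply/forallP/forallP.
  move=> H m; apply/implyP=> mB.
  have := H (pblock P i); rewrite blkP /= => /forallP/(_ m).
  by rewrite mB /= inblk /= zle.
move=> H B; apply/implyP => BP; apply/forallP => m; apply/implyP => mB.
apply/implyP => iB. rewrite zle.
by have := H m; rewrite (blk_def BP iB) mB.
Qed.

Lemma minE i : is_min_in_block P i = [forall m in pblock P i, (i <= m)%N].
Proof.
apply/forallP/forallP.
  move=> H m; apply/implyP=> mB.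
  have := H (pblock P i); rewrite blkP /= => /forallP/(_ m).
  by rewrite mB /= inblk /= zle.
move=> H B; apply/implyP => BP; apply/forallP => m; apply/implyP => mB.
apply/implyP => iB. rewrite zle.
by have := H m; rewrite (blk_def BP iB) mB.
Qed.

Lemma max_noarc i : is_max_in_block P i = ~~ [exists j, is_arc P i j].
Proof.
rewrite maxE; apply/idP/negP.
  move=> /forallP H /existsP[j]; rewrite arcE => /and3P[ij jB _].
  by have := H j; rewrite jB /=; lia.
move=> H; apply/forallP => m; apply/implyP => mB; rewrite leqNgt; apply/negP => im.
apply: H.
have Pm0 : (fun x : pt n => (x \in pblock P i) && (i < x)%N) m by rewrite /= mB im.
case: (@arg_minnP _ m (fun x : pt n => (x \in pblock P i) && (i < x)%N) (fun x : pt n => nat_of_ord x) Pm0) => j /andP[jB ij] Hmin.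
apply/existsP; exists j; rewrite arcE ij jB /=; apply/forallP => m'.
apply/implyP => m'B; apply/implyP => im'. apply: Hmin. by rewrite m'B im'.
Qed.

Lemma min_noarc j : is_min_in_block P j = ~~ [exists i, is_arc P i j].
Proof.
rewrite minE; apply/idP/negP.
  move=> /forallP H /existsP[i]; rewrite arcE => /and3P[ij jB _].
  have iB : i \in pblock P j by rewrite (blk_sym jB) inblk.
  by have := H i; rewrite iB /=; lia.
move=> H; apply/forallP => m; apply/implyP => mB; rewrite leqNgt; apply/negP => im.
apply: H.
have Pm0 : (fun x : pt n => (x \in pblock P j) && (x < j)%N) m by rewrite /= mB im.
case: (@arg_maxnP _ m (fun x : pt n => (x \in pblock P j) && (x < j)%N) (fun x : pt n => nat_of_ord x) Pm0) => i /andP[iB ij] Hmax.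
have Ei : pblock P i = pblock P j by apply: blk_sym.
apply/existsP; exists i; rewrite arcE ij Ei inblk /=; apply/forallP => m'.
apply/implyP => m'B; apply/implyP => im'. rewrite leqNgt; apply/negP => m'j.
have := Hmax m'; rewrite m'B m'j /= => /(_ isT). lia.
Qed.

Lemma card_max : #|P| = #|[set x | is_max_in_block P x]|.
Proof.
have EP : P = pblock P @: [set x | is_max_in_block P x].
  apply/setP => B; apply/idP/imsetP.
    move=> BP. have : B != set0.
      by case/and3P: HP => _ _ n0; apply: contraNneq n0 => <-.
    case/set0Pn => x0 xB.
    case: (@arg_maxnP _ x0 (fun x => x \in B) (fun x : pt n => nat_of_ord x) xB)
      => x xB' Hmax.
    exists x; last by rewrite (blk_def BP xB').
    rewrite inE maxE (blk_def BP xB'); apply/forallP => m; apply/implyP => mB.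
    exact: Hmax.
  by case=> x _ ->; exact: blkP.
rewrite {1}EP card_in_imset // => x y; rewrite !inE !maxE => /forallP Hx /forallP Hy E.
have := Hx y; have := Hy x; rewrite -E inblk E inblk /= => a b.
by apply: val_inj; apply/eqP; rewrite eqn_leq a b.
Qed.

Lemma card_min : #|P| = #|[set x | is_min_in_block P x]|.
Proof.
have EP : P = pblock P @: [set x | is_min_in_block P x].
  apply/setP => B; apply/idP/imsetP.
    move=> BP. have : B != set0.
      by case/and3P: HP => _ _ n0; apply: contraNneq n0 => <-.
    case/set0Pn => x0 xB.
    case: (@arg_minnP _ x0 (fun x => x \in B) (fun x : pt n => nat_of_ord x) xB)
      => x xB' Hmin.
    exists x; last by rewrite (blk_def BP xB').
    rewrite inE minE (blk_def BP xB'); apply/forallP => m; apply/implyP => mB.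
    exact: Hmin.
  by case=> x _ ->; exact: blkP.
rewrite {1}EP card_in_imset // => x y; rewrite !inE !minE => /forallP Hx /forallP Hy E.
have := Hx y; have := Hy x; rewrite -E inblk E inblk /= => a b.
by apply: val_inj; apply/eqP; rewrite eqn_leq a b.
Qed.
End Part.

Section Chain.
Variable n : nat.
Variable A : rel (pt n).
Hypothesis Alt : forall x y, A x y -> (x < y)%N.
Hypothesis Aout : forall x y y', A x y -> A x y' -> y = y'.
Hypothesis Ain : forall x x' y, A x y -> A x' y -> x = x'.

Definition fA (x : pt n) := odflt x [pick y | A x y].
Definition gA (y : pt n) := odflt y [pick x | A x y].

Lemma fAP x : A x (fA x) \/ fA x = x /\ forall y, ~~ A x y.
Proof. rewrite /fA; case: pickP => [y Hy|H]; [left | right; split => // y]; by rewrite ?H. Qed.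
Lemma gAP y : A (gA y) y \/ gA y = y /\ forall x, ~~ A x y.
Proof. rewrite /gA; case: pickP => [x Hx|H]; [left | right; split => // x]; by rewrite ?H. Qed.
Lemma fA_eq x y : A x y -> fA x = y.
Proof. move=> Axy; case: (fAP x) => [H|[_ H]]; first exact: Aout H Axy.
by rewrite (negbTE (H y)) in Axy. Qed.
Lemma gA_eq x y : A x y -> gA y = x.
Proof. move=> Axy; case: (gAP y) => [H|[_ H]]; first exact: Ain H Axy.
by rewrite (negbTE (H x)) in Axy. Qed.
Lemma f_ge (x : pt n) : (x <= fA x)%N.
Proof. case: (fAP x) => [H | [-> _]] //. exact: ltnW (Alt H). Qed.
Lemma iter_f_ge m (x : pt n) : (x <= iter m fA x)%N.
Proof. elim: m => //= m IH; exact: leq_trans IH (f_ge _). Qed.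
Lemma iter_f_mono a b (x : pt n) : (a <= b)%N -> (iter a fA x <= iter b fA x)%N.
Proof. move=> ab; rewrite -(subnK ab) iterD; exact: iter_f_ge. Qed.
Lemma iter_f_fix m x : fA x = x -> iter m fA x = x.
Proof. move=> Hx; elim: m => //= m IH; by rewrite IH. Qed.

Definition rA (y : pt n) := iter n.*2.+1 gA y.
Lemma iter_g_bound m (y : pt n) : gA (iter m gA y) = iter m gA y \/ (iter m gA y + m <= y)%N.
Proof.
elim: m => [|m IH] /=; first by right; rewrite addn0.
case: IH => [H | H]; first by left; rewrite !H.
case: (gAP (iter m gA y)) => [Ha | [Hb _]]; last by left; rewrite !Hb.
right; have := Alt Ha; lia.
Qed.
Lemma rA_fix y : gA (rA y) = rA y.
Proof. case: (iter_g_bound n.*2.+1 y) => // H. have := ltn_ord y. rewrite /rA in H *. lia. Qed.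
Lemma rA_g y : rA (gA y) = rA y.
Proof. rewrite /rA -iterSr iterS. exact: rA_fix. Qed.
Lemma chain y : exists c, y = iter c fA (rA y).
Proof.
suff H : forall s, exists c, y = iter c fA (iter s gA y) by exact: H.
elim=> [|s [c Hc]]; first by exists 0.
rewrite iterS. case: (gAP (iter s gA y)) => [H | [H _]].
  by exists c.+1; rewrite iterSr (fA_eq H).
by exists c; rewrite H.
Qed.
Lemma rA_f x : rA (fA x) = rA x.
Proof. case: (fAP x) => [H | [-> _]] //. by rewrite -(rA_g (fA x)) (gA_eq H). Qed.
Lemma rA_iter c x : rA (iter c fA x) = rA x.
Proof. elim: c => //= c IH; by rewrite rA_f. Qed.

Definition QA := preim_partition rA [set: pt n].
Lemma QAP : partition QA [set: pt n].
Proof. exact: preim_partitionP. Qed.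
Lemma QA_blk x y : (y \in pblock QA x) = (rA x == rA y).
Proof.
rewrite /QA /preim_partition pblock_equivalence_partition ?inE //.
move=> a b c _ _ _ /=; split => // /eqP ->. by [].
Qed.

Lemma QA_arc i j : is_arc QA i j = A i j.
Proof.
rewrite (arcE QAP). apply/idP/idP.
  case/and3P => ij; rewrite QA_blk => /eqP rij /forallP Hm.
  have [a Ha] := chain i; have [b Hb] := chain j. rewrite -rij in Hb.
  have ab : (a < b)%N.
    rewrite ltnNge; apply/negP => ba. have := iter_f_mono (rA i) ba.
    rewrite -Ha -Hb. lia.
  case: (fAP i) => [Hf | [Hfix _]].
    have fij : (fA i <= j)%N.
      have := iter_f_mono (rA i) ab. by rewrite iterS -Ha -Hb.
    have jfi : (j <= fA i)%N.
      have := Hm (fA i). rewrite QA_blk rA_f eqxx /= (Alt Hf). by [].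
    have -> : j = fA i by apply: val_inj; apply/eqP; rewrite eqn_leq jfi fij.
    exact: Hf.
  rewrite -(subnK (ltnW ab)) iterD -Ha iter_f_fix // in Hb.
  by rewrite -Hb ltnn in ij.
move=> Aij. have ij := Alt Aij. rewrite ij QA_blk -(fA_eq Aij) rA_f eqxx /=.
apply/forallP => m; apply/implyP; rewrite QA_blk => /eqP rim; apply/implyP => im.
have [a Ha] := chain i; have [b Hb] := chain m. rewrite -rim in Hb.
have ab : (a < b)%N.
  rewrite ltnNge; apply/negP => ba. have := iter_f_mono (rA i) ba.
  rewrite -Ha -Hb. lia.
rewrite Hb -(subnK ab) iterD iterS -Ha; exact: iter_f_ge.
Qed.
End Chain.

Section Main.
Variable n : nat.
Variable P : {set {set pt n}}.
Hypothesis NP : NCB P.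

Lemma HP : partition P [set: pt n].
Proof. by case: NP => [[]]. Qed.

Lemma plus_arcE i j : plus_arc P i j = (is_arc P i j && (j != i.+1 :> nat))
  || [&& (j == i.+1 :> nat), is_max_in_block P i & is_min_in_block P j].
Proof. by rewrite /plus_arc zeq. Qed.

Lemma PAlt x y : plus_arc P x y -> (x < y)%N.
Proof.
rewrite plus_arcE => /orP[/andP[a _] | /and3P[/eqP -> _ _]] //.
by move: a; rewrite (arcE HP) => /and3P[].
Qed.

Lemma PAout x y y' : plus_arc P x y -> plus_arc P x y' -> y = y'.
Proof.
rewrite !plus_arcE => /orP[/andP[a _] | /and3P[e mx _]] /orP[/andP[a' _] | /and3P[e' mx' _]].
- move: (a) (a'); rewrite !(arcE HP) => /and3P[xy yB /forallP H] /and3P[xy' yB' /forallP H'].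
  have := H y'; have := H' y; rewrite yB yB' xy xy' /= => h1 h2.
  by apply: val_inj; apply/eqP; rewrite eqn_leq h1 h2.
- by move: mx'; rewrite (max_noarc HP) => /existsPn/(_ y); rewrite a.
- by move: mx; rewrite (max_noarc HP) => /existsPn/(_ y'); rewrite a'.
- by apply: val_inj; rewrite /= (eqP e) (eqP e').
Qed.

Lemma PAin x x' y : plus_arc P x y -> plus_arc P x' y -> x = x'.
Proof.
rewrite !plus_arcE => /orP[/andP[a _] | /and3P[e _ mn]] /orP[/andP[a' _] | /and3P[e' _ mn']].
- move: (a) (a'); rewrite !(arcE HP) => /and3P[xy yB /forallP H] /and3P[xy' yB' /forallP H'].
  have E : pblock P x = pblock P x' by rewrite -(blk_sym HP yB) (blk_sym HP yB').
  have xB' : x \in pblock P x' by rewrite -E (inblk HP).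
  have x'B : x' \in pblock P x by rewrite E (inblk HP).
  case: (ltngtP x x') => [lt|lt|eq]; last exact: val_inj.
  + by have := H x'; rewrite x'B lt /=; lia.
  + by have := H' x; rewrite xB' lt /=; lia.
- by move: mn'; rewrite (min_noarc HP) => /existsPn/(_ x); rewrite a.
- by move: mn; rewrite (min_noarc HP) => /existsPn/(_ x'); rewrite a'.
- apply: val_inj; move: e e' => /eqP e /eqP e'. rewrite e in e'. by case: e'.
Qed.

Lemma arc_rev i j : is_arc P i j -> is_arc P (rev_ord j) (rev_ord i).
Proof.
case: NP => [[_ H] _] /(H i j) [i' [j' [e1 [e2 a]]]].
have -> : rev_ord j = i' by apply: zinj; rewrite zrev e1.
have -> : rev_ord i = j' by apply: zinj; rewrite zrev e2.
exact: a.
Qed.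

Lemma max_rev i : is_max_in_block P i -> is_min_in_block P (rev_ord i).
Proof.
rewrite (max_noarc HP) (min_noarc HP) => /existsPn H; apply/existsPn => x.
apply/negP => /arc_rev; rewrite rev_ordK => Hx.
by have := H (rev_ord x); rewrite Hx.
Qed.

Lemma min_rev i : is_min_in_block P i -> is_max_in_block P (rev_ord i).
Proof.
rewrite (max_noarc HP) (min_noarc HP) => /existsPn H; apply/existsPn => x.
apply/negP => /arc_rev; rewrite rev_ordK => Hx.
by have := H (rev_ord x); rewrite Hx.
Qed.

Lemma plus_rev i j : plus_arc P i j -> plus_arc P (rev_ord j) (rev_ord i).
Proof.
have := ltn_ord i; have := ltn_ord j => li lj.
rewrite !plus_arcE => /orP[/andP[a ne] | /and3P[e mx mn]]; apply/orP; [left|right].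
  rewrite arc_rev //=. apply/negP => /eqP E; move/negP: ne; apply; apply/eqP. lia.
rewrite min_rev // max_rev // andbT /=. apply/eqP. move/eqP: e. lia.
Qed.

Lemma succ_char x : [exists y, plus_arc P y x] =
  [exists y : pt n, (x == y.+1 :> nat) && is_max_in_block P y].
Proof.
apply/existsP/existsP.
  case=> y; rewrite plus_arcE => /orP[/andP[a ne] | /and3P[e mx _]]; last first.
    by exists y; rewrite e mx.
  move: (a); rewrite (arcE HP) => /and3P[yx xB /forallP Hy].
  have lx := ltn_ord x.
  have zK : (inord (n' := n.*2) x.-1 : nat) = x.-1 by rewrite inordK //; lia.
  set z : pt n := inord x.-1 in zK *.
  exists z; rewrite zK; apply/andP; split; first by apply/eqP; lia.
  rewrite (max_noarc HP); apply/existsP => -[s Hzs].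
  move: (Hzs); rewrite (arcE HP) => /and3P[zs sB _].
  have zB : z \notin pblock P y.
    apply/negP => zB. have := Hy z; rewrite zB /=. move/eqP: ne. lia.
  have sx : s != x.
    apply/negP => /eqP Es. rewrite Es in sB.
    move: zB; rewrite -(blk_sym HP xB) (blk_sym HP sB) (inblk HP). by [].
  have := proj2 NP y z x s a Hzs. rewrite !zlt.
  move/eqP: ne => ne. move: sx => /eqP sx.
  have sx' : (x < s)%N.
    rewrite ltn_neqAle; apply/andP; split; last by rewrite zK in zs; lia.
    by apply/eqP => E; apply: sx; apply: val_inj.
  have yz : (y < z)%N by rewrite zK; lia.
  have zx : (z < x)%N by rewrite zK; lia.
  move=> /(_ yz zx sx') [_]. rewrite /zval zK. lia.
case=> y /andP[e mx].
case Hmin : (is_min_in_block P x).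
  by exists y; rewrite plus_arcE e mx Hmin /= orbT.
move: Hmin; rewrite (min_noarc HP) => /negbFE/existsP[p Hp].
exists p; rewrite plus_arcE Hp /=.
have py : p != y.
  apply/negP => /eqP Ep; move: mx; rewrite (max_noarc HP) => /existsPn/(_ x).
  by rewrite -Ep Hp.
apply/orP; left. apply/negP => /eqP E; move/negP: py; apply; apply/eqP.
apply: val_inj => /=; move/eqP: e; lia.
Qed.

End Main.

Theorem proposition5p1 (n k : nat) (P : {set {set pt n}}) :
  NCB P -> #|P| = k.*2.+1 ->
  exists Q : {set {set pt n}},
    is_setpart Q /\
    (forall i j : pt n, is_arc Q i j = plus_arc P i j) /\
    NCB Q /\ #|Q| = (n - k).*2.+1.
Proof.
move=> NP cP.
have HP := HP NP.
pose A := plus_arc P.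
have Alt := PAlt NP; have Aout := PAout NP; have Ain := PAin NP.
have QP := QAP A.
have Qarc := QA_arc Alt Aout Ain.
exists (QA A); split; first exact: QP.
split; first exact: Qarc.
split.
  split.
    split; first exact: QP.
    move=> i j; rewrite Qarc; split.
      move=> H; exists (rev_ord j), (rev_ord i); rewrite !zrev Qarc.
      by split; [|split; [|exact: plus_rev]].
    case=> i' [j' [e1 [e2 H]]]. rewrite Qarc in H.
    have Ei : i' = rev_ord j by apply: zinj; rewrite zrev.
    have Ej : j' = rev_ord i by apply: zinj; rewrite zrev.
    by have := plus_rev NP H; rewrite Ei Ej !rev_ordK.
  move=> i j k' l; rewrite !Qarc /A !plus_arcE => H1 H2 ij jk kl.
  case/orP: H1 => [/andP[a1 _] | /and3P[/eqP e _ _]]; last first.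
    by move: ij jk; rewrite !zlt e; lia.
  case/orP: H2 => [/andP[a2 _] | /and3P[/eqP e _ _]]; last first.
    by move: jk kl; rewrite !zlt e; lia.
  exact: (proj2 NP i j k' l a1 a2 ij jk kl).
set M := [set y | is_max_in_block P y].
set M' := [set y | is_max_in_block P y && (y < n.*2)%N].
have cM : #|M| = #|M'|.+1.
  rewrite (cardsD1 ord_max).
  have -> : ord_max \in M.
    rewrite inE (maxE HP); apply/forallP => m; apply/implyP => _ /=.
    by have := ltn_ord m; lia.
  rewrite add1n.
  congr (_.+1); apply: eq_card => y; rewrite !inE.
  have := ltn_ord y; case: (is_max_in_block P y); rewrite ?andbF ?andbT //= => ly.
  apply/idP/idP.
    move=> H; rewrite ltn_neqAle; apply/andP; split; last by lia.
    by apply: contra H => /eqP E; apply/eqP; apply: val_inj.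
  by move=> H; apply/eqP => E; rewrite E /= ltnn in H.
set S := [set x : pt n | [exists y, plus_arc P y x]].
have cS : #|S| = #|M'|.
  have -> : S = (fun y : pt n => inord (n' := n.*2) y.+1) @: M'.
    apply/setP => x; rewrite inE succ_char //. apply/existsP/imsetP.
      case=> y /andP[/eqP e mx]. exists y.
        by rewrite inE mx /=; have := ltn_ord x; lia.
      by apply: ord_inj; rewrite inordK -e //; have := ltn_ord x; lia.
    case=> y; rewrite inE => /andP[mx yl] ->. exists y.
    by rewrite mx inordK ?eqxx //; lia.
  rewrite card_in_imset // => x y; rewrite !inE => /andP[_ xl] /andP[_ yl] E.
  apply: val_inj. have := congr1 (@nat_of_ord _) E. rewrite !inordK //; try lia.
  by case.
have cQ : #|QA A| = #|~: S|.
  rewrite (card_min QP); apply: eq_card => x; rewrite !inE (min_noarc QP).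
  congr (~~ _); apply: eq_existsb => y. by rewrite Qarc.
have cSle : #|S| <= n.*2.+1 by rewrite -[X in _ <= X](card_ord n.*2.+1); apply: max_card.
rewrite cQ cardsCs card_ord. move: cP; rewrite (card_max HP) -/M cM => cP.
rewrite setCK in cQ *. lia.
Qed.
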